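(* Let $u,v$ be rational numbers with $u^2-3v^2=1$. Then $$x_1=1,\quad x_2=2v,\quad y_1=4v^2+1,\quad y_2=2v(2v^2+1),\quad z_1=4uv^2,\quad z_2=8v^4+4v^2+1$$ satisfy $(x_1^4+x_2^4)(y_1^4+y_2^4)=z_1^4+z_2^4$. In fact, for arbitrary $u,v$, the difference $z_1^4+z_2^4-(x_1^4+x_2^4)(y_1^4+y_2^4)$ with these values equals, up to sign, $256v^8(u^2+3v^2+1)(u^2-3v^2-1)$. In particular, every integer solution $(u,v)$ of the Pell equation $u^2-3v^2=1$ yields an integer solution of this quartic equation, so the equation has infinitely many integer solutions with $x_1=1$. *)

(* Defs.v *)
From mathcomp Require Import all_boot all_order all_algebra.
Set Implicit Arguments. Unset Strict Implicit. Unset Printing Implicit Defensive.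
Import GRing.Theory Num.Theory.
Local Open Scope ring_scope.

Definition quartic_eq (R : comRingType) (x1 x2 y1 y2 z1 z2 : R) : Prop :=
  (x1 ^+ 4 + x2 ^+ 4) * (y1 ^+ 4 + y2 ^+ 4) = z1 ^+ 4 + z2 ^+ 4.

Definition px1 (R : comRingType) (u v : R) : R := 1.
Definition px2 (R : comRingType) (u v : R) : R := 2 * v.
Definition py1 (R : comRingType) (u v : R) : R := 4 * v ^+ 2 + 1.
Definition py2 (R : comRingType) (u v : R) : R := 2 * v * (2 * v ^+ 2 + 1).
Definition pz1 (R : comRingType) (u v : R) : R := 4 * u * v ^+ 2.
Definition pz2 (R : comRingType) (u v : R) : R := 8 * v ^+ 4 + 4 * v ^+ 2 + 1.

(* Main.v *)
Require Import Defs.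
From mathcomp Require Import all_boot all_order all_algebra.
From mathcomp Require Import ring zify.
Import GRing.Theory Num.Theory.
Local Open Scope ring_scope.

Lemma key (R : comRingType) (u v : R) :
  (pz1 u v ^+ 4 + pz2 u v ^+ 4)
    - (px1 u v ^+ 4 + px2 u v ^+ 4) * (py1 u v ^+ 4 + py2 u v ^+ 4)
  = 256 * v ^+ 8 * (u ^+ 2 + 3 * v ^+ 2 + 1) * (u ^+ 2 - 3 * v ^+ 2 - 1).
Proof. rewrite /px1 /px2 /py1 /py2 /pz1 /pz2. ring. Qed.

Lemma solq (R : comRingType) (u v : R) : u ^+ 2 - 3 * v ^+ 2 = 1 ->
  quartic_eq (px1 u v) (px2 u v) (py1 u v) (py2 u v) (pz1 u v) (pz2 u v).
Proof.
move=> h; rewrite /quartic_eq; apply/eqP; rewrite eq_sym -subr_eq0; apply/eqP.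
by rewrite key h subrr mulr0.
Qed.

Lemma pell_big (n : nat) : exists u v : int,
  u ^+ 2 - 3 * v ^+ 2 = 1 /\ 1 <= u /\ (n%:Z <= v).
Proof.
elim: n => [|n [u [v [h [hu hv]]]]].
  by exists 1, 0.
exists (2 * u + 3 * v), (u + 2 * v); split; last by split; lia.
move: h; rewrite !expr2; nia.
Qed.

Theorem mainTheorem9 :
  (* (1) rational points of the conic u^2 - 3 v^2 = 1 give solutions *)
  (forall u v : rat, u ^+ 2 - 3 * v ^+ 2 = 1 ->
     quartic_eq (px1 u v) (px2 u v) (py1 u v) (py2 u v) (pz1 u v) (pz2 u v))
  /\
  (* (2) for arbitrary u, v the defect equals, up to sign, 256 v^8 (u^2+3v^2+1)(u^2-3v^2-1) *)
  (forall u v : rat,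
     let D := (pz1 u v ^+ 4 + pz2 u v ^+ 4)
              - (px1 u v ^+ 4 + px2 u v ^+ 4) * (py1 u v ^+ 4 + py2 u v ^+ 4) in
     let c := 256 * v ^+ 8 * (u ^+ 2 + 3 * v ^+ 2 + 1) * (u ^+ 2 - 3 * v ^+ 2 - 1) in
     D = c \/ D = - c)
  /\
  (* (3) integer Pell solutions give integer solutions *)
  (forall u v : int, u ^+ 2 - 3 * v ^+ 2 = 1 ->
     quartic_eq (px1 u v) (px2 u v) (py1 u v) (py2 u v) (pz1 u v) (pz2 u v))
  /\
  (* (4) hence infinitely many integer solutions with x1 = 1
         (arising this way, with arbitrarily large x2) *)
  (forall N : int, exists u v : int,
     u ^+ 2 - 3 * v ^+ 2 = 1 /\ N < px2 u v /\
     quartic_eq (px1 u v) (px2 u v) (py1 u v) (py2 u v) (pz1 u v) (pz2 u v)).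
Proof.
split; first by move=> u v; apply: solq.
split; first by move=> u v /=; left; apply: key.
split; first by move=> u v; apply: solq.
move=> N; have [u [v [h [hu hv]]]] := pell_big (`|N|.+1)%N.
exists u, v; split=> //; split; last exact: solq.
rewrite /px2; lia.
Qed.
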